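(* Let $A$ be a commutative ring whose nilradical $N$ is a prime ideal. Let $E$ be a non-zero $A$-module and $R=A\propto E$ the trivial ring extension of $A$ by $E$. The following are equivalent: (1) $R$ is Hermite; (2) $R$ is B\'ezout; (3) $A$ is B\'ezout, $A_P$ is a domain for each $P\in\mathrm{Supp}(E)$, $E$ is FP-injective and all finitely generated submodules of $E$ are cyclic.
   Context: All rings are commutative with identity. The trivial ring extension $R=A\propto E$ is the ring with underlying group $A\times E$ and multiplication $(a,e)(a',e')=(aa',ae'+a'e)$. A ring is B\'ezout if every finitely generated ideal is principal. A ring $R$ is Hermite if for every $a,b\in R$ there exist $d,a',b'\in R$ with $a=da'$, $b=db'$ and $Ra'+Rb'=R$. A module $E$ is FP-injective if $\mathrm{Ext}^1(F,E)=0$ for every finitely presented module $F$. $\mathrm{Supp}(E)=\{P \text{ prime}: E_P\neq 0\}$. *)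

(* Defs.v *)
From HB Require Import structures.
From mathcomp Require Import all_boot all_order all_algebra.
Set Implicit Arguments. Unset Strict Implicit. Unset Printing Implicit Defensive.
Import GRing.Theory.
Local Open Scope ring_scope.

Section TrivExt.
Variables (A : comNzRingType) (E : lmodType A).

Definition triv_ext : Type := (A * E)%type.
HB.instance Definition _ := GRing.Zmodule.on triv_ext.

Definition te_one : triv_ext := (1, 0).
Definition te_mul (x y : triv_ext) : triv_ext :=
  (x.1 * y.1, x.1 *: y.2 + y.1 *: x.2).

Lemma te_mulA : associative te_mul.
Proof.
case=> a e [b f] [c g]; rewrite /te_mul /= mulrA; congr pair.
by rewrite !scalerDr !scalerA [c * a]mulrC [c * b]mulrC addrA.
Qed.

Lemma te_mulC : commutative te_mul.
Proof. by case=> a e [b f]; rewrite /te_mul /= mulrC addrC. Qed.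

Lemma te_mul1 : left_id te_one te_mul.
Proof. by case=> a e; rewrite /te_mul /= mul1r scale1r scaler0 addr0. Qed.

Lemma te_mulDl : left_distributive te_mul +%R.
Proof.
case=> a e [b f] [c g]; rewrite /te_mul /=; congr pair; first by rewrite mulrDl.
by rewrite scalerDl scalerDr addrACA.
Qed.

Lemma te_one_neq0 : te_one != 0.
Proof. by apply/eqP => -[] /eqP; rewrite oner_eq0. Qed.

HB.instance Definition _ := GRing.Zmodule_isComNzRing.Build triv_ext
  te_mulA te_mulC te_mul1 te_mulDl te_one_neq0.
End TrivExt.

Definition in_ideal_gen (R : comNzRingType) (s : seq R) (x : R) : Prop :=
  exists c : 'I_(size s) -> R, x = \sum_(i < size s) c i * s`_i.

Definition Bezout (R : comNzRingType) : Prop :=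
  forall s : seq R, exists d : R,
    forall x : R, in_ideal_gen s x <-> exists r : R, x = r * d.

Definition Hermite (R : comNzRingType) : Prop :=
  forall a b : R, exists d a' b' : R,
    [/\ a = d * a', b = d * b' & exists u v : R, u * a' + v * b' = 1].

Definition is_nilpotent (R : comNzRingType) (x : R) : Prop :=
  exists n : nat, x ^+ n = 0.

Definition prime_ideal (R : comNzRingType) (P : R -> Prop) : Prop :=
  [/\ P 0, (forall x y, P x -> P y -> P (x + y)),
      (forall r x, P x -> P (r * x)), ~ P 1 &
      (forall x y, P (x * y) -> P x \/ P y)].

Definition nilradical (R : comNzRingType) : R -> Prop := @is_nilpotent R.

(* Localizations at a prime P, presented as fractions a/s (s \notin P) *)
(* modulo the usual equivalence relation.                             *)
Section Loc.
Variables (A : comNzRingType) (P : A -> Prop).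

Definition loc_frac (x : A * A) : Prop := ~ P x.2.
Definition loc_eq (x y : A * A) : Prop :=
  exists u : A, ~ P u /\ u * (x.1 * y.2 - y.1 * x.2) = 0.
Definition loc_mul (x y : A * A) : A * A := (x.1 * y.1, x.2 * y.2).
Definition loc_zero : A * A := (0, 1).
Definition loc_one : A * A := (1, 1).

Definition loc_is_domain : Prop :=
  ~ loc_eq loc_one loc_zero /\
  forall x y, loc_frac x -> loc_frac y ->
    loc_eq (loc_mul x y) loc_zero -> loc_eq x loc_zero \/ loc_eq y loc_zero.

Variable (E : lmodType A).
(* E_P: pairs (e, s) with s \notin P modulo (e,s) ~ (f,t) iff u(te - sf) = 0 *)
Definition locm_eq (x y : E * A) : Prop :=
  exists u : A, ~ P u /\ u *: (y.2 *: x.1 - x.2 *: y.1) = 0.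
Definition locm_nonzero : Prop :=
  exists x : E * A, ~ P x.2 /\ ~ locm_eq x (0, 1).
End Loc.

Definition in_Supp (A : comNzRingType) (E : lmodType A) (P : A -> Prop) : Prop :=
  prime_ideal P /\ locm_nonzero P E.

(* FP-injective modules: every homomorphism  *)
(* from a finitely generated submodule K of A^n into E extends to A^n. *)
(* K is generated by the rows of the m x n matrix K; a homomorphism   *)
(* K -> E is given by images e_i of the generators respecting all     *)
(* relations; an extension to A^n is given by images x_j of the basis. *)
Definition FP_injective (A : comNzRingType) (E : lmodType A) : Prop :=
  forall (m n : nat) (K : 'M[A]_(m, n)) (e : 'I_m -> E),
    (forall c : 'I_m -> A,
        (forall j : 'I_n, \sum_(i < m) c i * K i j = 0) ->
        \sum_(i < m) c i *: e i = 0) ->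
    exists x : 'I_n -> E, forall i : 'I_m, \sum_(j < n) K i j *: x j = e i.

Definition in_submod_gen (A : comNzRingType) (E : lmodType A) (s : seq E) (x : E) : Prop :=
  exists c : 'I_(size s) -> A, x = \sum_(i < size s) c i *: s`_i.

Definition fg_submods_cyclic (A : comNzRingType) (E : lmodType A) : Prop :=
  forall s : seq E, exists e : E,
    forall x : E, in_submod_gen s x <-> exists a : A, x = a *: e.

(* Main.v *)
Require Import Defs.
From HB Require Import structures.
From mathcomp Require Import all_boot all_order all_algebra.
From mathcomp Require Import ring.
From mathcomp Require classical_sets.
From Stdlib Require Import Classical.
Set Implicit Arguments. Unset Strict Implicit.
Import GRing.Theory.
Local Open Scope ring_scope.


Definition M2 (B : comNzRingType) (M : lmodType B) : Prop :=
  forall e f : M, exists g, (exists u v : B, g = u *: e + v *: f) /\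
    (exists p, e = p *: g) /\ (exists q, f = q *: g).

Lemma cons_sum (B : comNzRingType) (M : lmodType B) (a : M) (s : seq M) (c : 'I_(size (a :: s)) -> B) :
  \sum_(i < size (a :: s)) c i *: (a :: s)`_i =
  c ord0 *: a + \sum_(i < size s) c (lift ord0 i) *: s`_i.
Proof. by rewrite /= big_ord_recl /=. Qed.

Lemma cyc_of_M2 (B : comNzRingType) (M : lmodType B) : M2 M -> fg_submods_cyclic M.
Proof.
move=> HM; elim=> [|a s [d IH]].
  exists 0 => x; split.
    by case=> c ->; exists 0; rewrite big_ord0 scaler0.
  by case=> r ->; exists (fun _ => 0); rewrite big_ord0 scaler0.
have [g [[u [v eg]] [[p ea] [q ed]]]] := HM a d.
exists g => x; split.
  case=> c; rewrite cons_sum => ->.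
  have [r' er'] : exists r', \sum_(i < size s) c (lift ord0 i) *: s`_i = r' *: d.
    by apply/IH; exists (fun i => c (lift ord0 i)).
  exists (c ord0 * p + r' * q).
  by rewrite er' ea ed !scalerA scalerDl.
case=> r ->.
have [c' ec'] : in_submod_gen s d by apply/IH; exists 1; rewrite scale1r.
exists (fun k : 'I_(size (a :: s)) => if unlift ord0 k is Some i then r * v * c' i else r * u).
rewrite cons_sum unlift_none.
under eq_bigr => i _ do rewrite liftK.
rewrite eg ec' scalerDr !scalerA; congr (_ + _).
by rewrite scaler_sumr; apply: eq_bigr => i _; rewrite scalerA.
Qed.

Definition P2 (R : comNzRingType) : Prop :=
  forall a b : R, exists d, (exists u v : R, d = u * a + v * b) /\
    (exists p, a = p * d) /\ (exists q, b = q * d).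

Lemma bez_of_P2 (R : comNzRingType) : P2 R -> Bezout R.
Proof.
move=> H; have := @cyc_of_M2 R R^o H.
by [].
Qed.

Lemma P2_of_bez (R : comNzRingType) : Bezout R -> P2 R.
Proof.
move=> H a b; have [d Hd] := H [:: a; b].
have [c ec] : in_ideal_gen [:: a; b] d by apply/Hd; exists 1; rewrite mul1r.
exists d; split.
  by exists (c ord0), (c (lift ord0 ord0)); rewrite ec /= !big_ord_recl big_ord0 addr0.
split.
  apply/Hd; exists (fun k => if val k == 0%N then 1 else 0).
  by rewrite /= !big_ord_recl big_ord0 /= mul1r mul0r !addr0.
apply/Hd; exists (fun k => if val k == 1%N then 1 else 0).
by rewrite /= !big_ord_recl big_ord0 /= mul1r mul0r addr0 add0r.
Qed.

Lemma herm_P2 (R : comNzRingType) : Hermite R -> P2 R.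
Proof.
move=> H a b; have [d [a' [b' [-> -> [u [v e]]]]]] := H a b.
exists d; split; last by split; [exists a'|exists b']; rewrite mulrC.
by exists u, v; rewrite -[d in LHS]mulr1 -e; ring.
Qed.


Lemma geom_nil (R : comNzRingType) (s : R) n : (1 - s) * \sum_(k < n) s ^+ k = 1 - s ^+ n.
Proof.
elim: n => [|n IH]; first by rewrite big_ord0 mulr0 expr0 subrr.
by rewrite big_ord_recr /= mulrDr IH exprS; ring.
Qed.

Lemma nil_unit (R : comNzRingType) (s : R) : is_nilpotent s -> exists w, (1 - s) * w = 1.
Proof. by case=> n sn; exists (\sum_(k < n) s ^+ k); rewrite geom_nil sn subr0. Qed.

Lemma herm_of_P2 (R : comNzRingType) : P2 R -> prime_ideal (@nilradical R) -> Hermite R.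
Proof.
move=> H [N0 Nadd Nmul N1 Nprime] a b.
have Nsub : forall x y : R, nilradical x -> nilradical y -> nilradical (x - y).
  by move=> x y Nx Ny; apply: (Nadd) => //; rewrite -mulN1r; apply: (Nmul).
have [d [[u [v ed]] [[p ea] [q eb]]]] := H a b.
have dt : d * (1 - u * p - v * q) = 0.
  have e : d = u * (p * d) + v * (q * d) by rewrite -ea -eb.
  by rewrite mulrBr mulrBr mulr1 {1}e; ring.
have [a1 [b1 [ea1 [eb1 nab]]]] : exists a1 b1, a = a1 * d /\ b = b1 * d /\
    (~ nilradical a1 \/ ~ nilradical b1).
  case: (classic (nilradical p /\ nilradical q)) => [[Np Nq]|]; last first.
    by move=> /not_and_or nn; exists p, q.
  have Nt : ~ nilradical (1 - u * p - v * q).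
    move=> Nt; apply: N1.
    have -> : (1 : R) = (1 - u * p - v * q) + (u * p + v * q) by ring.
    by apply: (Nadd) => //; apply: (Nadd); apply: (Nmul).
  exists (p + (1 - u * p - v * q)), q; split; last split => //.
    by rewrite mulrDl (mulrC (1 - _ - _)) dt addr0.
  left => Npt; apply: Nt.
  by have := Nsub _ _ Npt Np; rewrite addrAC subrr add0r.
have [g [[u' [v' eg]] [[a2 ea2] [b2 eb2]]]] := H a1 b1.
have gs : g * (1 - u' * a2 - v' * b2) = 0.
  have e : g = u' * (a2 * g) + v' * (b2 * g) by rewrite -ea2 -eb2.
  by rewrite mulrBr mulrBr mulr1 {1}e; ring.
have Ng : ~ nilradical g.
  move=> Ng; case: nab => []; [rewrite ea2|rewrite eb2]; apply; exact: (Nmul).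
have Ns : nilradical (1 - u' * a2 - v' * b2).
  have : nilradical (g * (1 - u' * a2 - v' * b2)) by rewrite gs.
  by case/Nprime.
have [w ew] := nil_unit Ns.
exists (d * g), a2, b2; split.
- by rewrite ea1 ea2; ring.
- by rewrite eb1 eb2; ring.
- exists (w * u'), (w * v'); rewrite -ew; ring.
Qed.


Section TE.
Variables (A : comNzRingType) (E : lmodType A).
Local Notation R := (triv_ext E).

Lemma teM (x y : R) : x * y = (x.1 * y.1, x.1 *: y.2 + y.1 *: x.2) :> A * E.
Proof. by []. Qed.
Lemma teD (x y : R) : x + y = (x.1 + y.1, x.2 + y.2) :> A * E.
Proof. by []. Qed.
Lemma te1 : (1 : R) = (1, 0) :> A * E. Proof. by []. Qed.
Lemma te0 : (0 : R) = (0, 0) :> A * E. Proof. by []. Qed.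

Lemma teX1 (x : R) n : (x ^+ n).1 = x.1 ^+ n.
Proof. by elim: n => [|n IH]; rewrite ?expr0 // !exprS teM /= IH. Qed.

Lemma teX2 (x : R) n : (x ^+ n.+1).2 = x.1 ^+ n *: (x.2 *+ n.+1).
Proof.
elim: n => [|n IH]; first by rewrite expr1 expr0 scale1r.
rewrite exprS teM /= IH teX1 scalerA -exprS -scalerDr.
by rewrite [in RHS]mulrS addrC.
Qed.

Lemma nilR (x : R) : nilradical x <-> nilradical x.1.
Proof.
split; case=> n en.
  by exists n; rewrite -teX1 en.
exists n.+1.
have -> : x ^+ n.+1 = ((x ^+ n.+1).1, (x ^+ n.+1).2) by case: (x ^+ n.+1).
by rewrite teX1 teX2 exprS en mulr0 scale0r.
Qed.

Lemma prime_nilR : prime_ideal (@nilradical A) -> prime_ideal (@nilradical R).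
Proof.
case=> N0 Nadd Nmul N1 Np; split.
- by apply/nilR.
- by move=> x y /nilR Nx /nilR Ny; apply/nilR; apply: Nadd.
- by move=> r x /nilR Nx; apply/nilR; apply: Nmul.
- by move=> /nilR.
- by move=> x y /nilR /Np [] /nilR; [left|right].
Qed.
End TE.


Section Krull.
Variable A : comNzRingType.

Definition PZ (I : A -> Prop) (X : A -> Prop) : Prop :=
  [/\ ~ X 1, (forall x y, X x -> X y -> X (x + y)),
      (forall r x, X x -> X (r * x)) &
      ((exists y, X y) -> forall y, I y -> X y)].

Lemma krull (I : A -> Prop) : I 0 -> (forall x y, I x -> I y -> I (x + y)) ->
  (forall r x, I x -> I (r * x)) -> ~ I 1 ->
  exists P, prime_ideal P /\ forall x, I x -> P x.
Proof.
move=> I0 Iadd Imul I1.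
case: (@classical_sets.Zorn_bigcup A (PZ I)) => [F FP Ftot|M [[M1 Madd Mmul MI] Mmax]].
  split.
  - by case=> X FX X1; have [+ _ _ _] := FP X FX; apply.
  - move=> x y [X FX Xx] [Y FY Yy].
    have [XY|YX] := Ftot X Y FX FY.
      by exists Y => //; have [_ + _ _] := FP Y FY; apply => //; apply: XY.
    by exists X => //; have [_ + _ _] := FP X FX; apply => //; apply: YX.
  - move=> r x [X FX Xx]; exists X => //; have [_ _ + _] := FP X FX; exact.
  - move=> [y [X FX Xy]] z Iz; exists X => //.
    by have [_ _ _ +] := FP X FX; apply => //; exists y.
have MI' : forall y, I y -> M y.
  apply: MI; apply: NNPP => nM.
  apply: (Mmax I); last by split => // _.
  split; first by move=> t Mt; case: nM; exists t.
  by move=> /(_ 0 I0) M0; apply: nM; exists 0.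
have M0 : M 0 by apply: MI'.
have ext : forall x, ~ M x -> exists m r, M m /\ 1 = m + r * x.
  move=> x nMx; apply: NNPP => H.
  pose B := fun z => exists m r, M m /\ z = m + r * x.
  apply: (Mmax B).
    split; first by move=> t Mt; exists t, 0; split => //; rewrite mul0r addr0.
    move=> BM; apply: nMx; apply: BM; exists 0, 1; split => //.
    by rewrite add0r mul1r.
  split.
  - by case=> m [r [Mm e]]; apply: H; exists m, r.
  - move=> _ _ [m [r [Mm ->]]] [m' [r' [Mm' ->]]].
    exists (m + m'), (r + r'); split; first exact: Madd.
    by rewrite mulrDl !addrA [m + _ + m']addrAC.
  - move=> s _ [m [r [Mm ->]]]; exists (s * m), (s * r); split; first exact: (Mmul).
    by rewrite mulrDr mulrA.
  - move=> _ y Iy; exists y, 0; split; [exact: MI'|by rewrite mul0r addr0].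
exists M; split => //; split => //.
move=> x y Mxy; apply: NNPP => /Classical_Prop.not_or_and [nx ny].
have [m1 [r1 [M1' e1]]] := ext x nx.
have [m2 [r2 [M2' e2]]] := ext y ny.
apply: M1.
have -> : (1 : A) = (m1 + r1 * x) * (m2 + r2 * y) by rewrite -e1 -e2 mul1r.
have -> : (m1 + r1 * x) * (m2 + r2 * y) = (m1 * (m2 + r2 * y) + r1 * x * m2) + (r1 * r2) * (x * y) by ring.
apply: (Madd); last exact: (Mmul).
apply: (Madd); first by rewrite mulrC; apply: (Mmul).
by apply: (Mmul).
Qed.
End Krull.


Section Gen.
Variables (A : comNzRingType) (E : lmodType A).
Hypothesis hN : prime_ideal (@nilradical A).

Definition Hprop := forall a : A, nilradical a -> forall x : E, exists s, s * a = 0 /\ s *: x = x.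

Lemma Hfam : Hprop -> forall a : A, nilradical a -> forall m (e : 'I_m -> E),
  exists s, s * a = 0 /\ forall i, s *: e i = e i.
Proof.
move=> HH a Na; elim=> [|m IH] e.
  by exists 0; split; [rewrite mul0r|case].
have [s2 [s2a s2e]] := IH (fun i => e (lift ord0 i)).
have [s1 [s1a s1e]] := HH a Na (e ord0).
exists (s1 + s2 - s1 * s2); split.
  by rewrite !mulrBl !mulrDl -mulrA s2a s1a mulr0 !addr0 subr0.
move=> i; rewrite scalerBl scalerDl -scalerA.
case: (unliftP ord0 i) => [j ->|->].
  by rewrite s2e addrAC subrr add0r.
by rewrite scalerA mulrC -scalerA s1e addrK.
Qed.

Lemma H_NE : Hprop -> forall a : A, nilradical a -> forall x : E, a *: x = 0.
Proof.
by move=> HH a Na x; have [s [sa sx]] := HH a Na x; rewrite -sx scalerA mulrC sa scale0r.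
Qed.

Lemma fam_gcd : P2 A -> forall m (c : 'I_m -> A), exists (d : A) (w g : 'I_m -> A),
  d = \sum_i w i * c i /\ forall i, c i = g i * d.
Proof.
move=> HP; elim=> [|m IH] c.
  by exists 0, (fun _ => 0), (fun _ => 0); split; [rewrite big_ord0|case].
have [d' [w' [g' [ed' eg']]]] := IH (fun i => c (lift ord0 i)).
have [d [[u [v ed]] [[p ep] [q eq]]]] := HP (c ord0) d'.
exists d, (fun i => if unlift ord0 i is Some j then v * w' j else u),
  (fun i => if unlift ord0 i is Some j then g' j * q else p); split.
  rewrite big_ord_recl unlift_none ed ed' mulr_sumr; congr (_ + _).
  by apply: eq_bigr => j _; rewrite liftK mulrA.
move=> i; case: (unliftP ord0 i) => [j ->|->]; last by [].
by rewrite ?liftK eg' eq mulrA.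
Qed.

Lemma nil_sum m (F : 'I_m -> A) : (forall i, nilradical (F i)) -> nilradical (\sum_i F i).
Proof.
case: hN => N0 Nadd _ _ _ HF.
by apply: (big_ind (@nilradical A)) => // x y; apply: (Nadd).
Qed.

Definition compat m n (K : 'I_m -> 'I_n -> A) (e : 'I_m -> E) :=
  forall c : 'I_m -> A, (forall j, \sum_i c i * K i j = 0) -> \sum_i c i *: e i = 0.

Lemma FPI : P2 A -> Hprop -> (forall d : A, ~ nilradical d -> forall x : E, exists y, x = d *: y) ->
  forall n m (K : 'I_m -> 'I_n -> A) (e : 'I_m -> E), compat K e ->
  exists x : 'I_n -> E, forall i, \sum_j K i j *: x j = e i.
Proof.
move=> HP HH Hdiv; elim=> [|n IH] m K e Hc.
  exists (fun _ => 0) => i; rewrite big_ord0.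
  have h : \sum_k (if k == i then 1 else 0) *: e k = 0 by apply: Hc => -[].
  move: h; rewrite (bigD1 i) //= eqxx scale1r big1 ?addr0 // => k /negbTE ->.
  by rewrite scale0r.
case: hN => N0 Nadd Nmul N1 Np.
pose c i := K i ord0.
case: (classic (exists i, ~ nilradical (c i))) => [[i0 ni0]|allN]; last first.
  have Nc : forall i, nilradical (c i) by move=> i; apply: NNPP => ni; apply: allN; exists i.
  have hc : compat (fun i j => K i (lift ord0 j)) e.
    move=> al hal.
    have [s [sw se]] := Hfam HH (nil_sum (fun i => Nmul (al i) _ (Nc i))) e.
    have h : \sum_i (s * al i) *: e i = 0.
      apply: Hc => j.
      case: (unliftP ord0 j) => [j' ->|->].
        by under eq_bigr => i _ do rewrite -mulrA; rewrite -mulr_sumr hal mulr0.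
      by under eq_bigr => i _ do rewrite -mulrA; rewrite -mulr_sumr.
    rewrite -[RHS]h; apply: eq_bigr => i _.
    by rewrite mulrC -scalerA se.
  have [x'' ex''] := IH m _ e hc.
  exists (fun j => if unlift ord0 j is Some j' then x'' j' else 0) => i.
  by rewrite big_ord_recl unlift_none scaler0 add0r -ex''; apply: eq_bigr => j _; rewrite liftK.
have [d [w [g [ed eg]]]] := fam_gcd HP c.
have Nd : ~ nilradical d by move=> Nd; apply: ni0; rewrite eg; apply: (Nmul).
pose k0 j := \sum_i w i * K i j.
pose K' i j := K i (lift ord0 j) - g i * k0 (lift ord0 j).
pose W := \sum_l w l *: e l.
pose e' i := e i - g i *: W.
have hc : compat K' e'.
  move=> al hal.
  pose tau := \sum_l al l * g l.
  have hal' : forall j, \sum_i al i * K i (lift ord0 j) = tau * k0 (lift ord0 j).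
    move=> j; have := hal j; rewrite /K'.
    under eq_bigr => i _ do rewrite mulrBr.
    rewrite sumrB => /eqP; rewrite subr_eq0 => /eqP ->.
    by rewrite /tau mulr_suml; apply: eq_bigr => i _; rewrite mulrA.
  have h : \sum_i (al i - tau * w i) *: e i = 0.
    apply: Hc => j.
    under eq_bigr => i _ do rewrite mulrBl -mulrA.
    rewrite sumrB -mulr_sumr -/(k0 j).
    case: (unliftP ord0 j) => [j' ->|->]; first by rewrite hal' subrr.
    have -> : k0 ord0 = d by rewrite ed.
    rewrite /tau mulr_suml; apply/eqP; rewrite subr_eq0; apply/eqP.
    by apply: eq_bigr => i _; rewrite /c in eg; rewrite eg mulrA.
  rewrite -[RHS]h /e'.
  under eq_bigr => i _ do rewrite scalerBr scalerA.
  under [in RHS]eq_bigr => i _ do rewrite scalerBl -scalerA.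
  rewrite !sumrB; congr (_ - _).
  by rewrite -scaler_suml -/tau /W scaler_sumr.
have [x'' ex''] := IH m K' e' hc.
pose r := W - \sum_j k0 (lift ord0 j) *: x'' j.
have [y ey] := Hdiv d Nd r.
exists (fun j => if unlift ord0 j is Some j' then x'' j' else y) => i.
rewrite big_ord_recl unlift_none.
under eq_bigr => j _ do rewrite liftK.
have -> : \sum_(j < n) K i (lift ord0 j) *: x'' j =
    \sum_(j < n) K' i j *: x'' j + g i *: \sum_j k0 (lift ord0 j) *: x'' j.
  rewrite scaler_sumr -big_split; apply: eq_bigr => j _.
  by rewrite /= scalerA -scalerDl /K' subrK.
rewrite ex'' /e' -/(c i) eg -scalerA -ey /r scalerBr.
by rewrite addrACA addNr addr0 addrC subrK.
Qed.

End Gen.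


Section Dir1.
Variables (A : comNzRingType) (E : lmodType A).
Local Notation R := (triv_ext E).
Hypothesis hN : prime_ideal (@nilradical A).
Hypothesis HR : P2 R.

Ltac tesimp H := rewrite ?teD ?teM /= in H; case: H.

Lemma d1_P2A : P2 A.
Proof.
move=> a b.
have [[d1 d2] [[[u1 u2] [[v1 v2] eD]] [[[p1 p2] eP] [[q1 q2] eQ]]]] := HR (a, 0) (b, 0).
tesimp eD => ed _; tesimp eP => ep _; tesimp eQ => eq _.
by exists d1; split; [exists u1, v1|split; [exists p1|exists q1]].
Qed.

Lemma d1_M2E : M2 E.
Proof.
move=> e f.
have [[d1 d2] [[[u1 u2] [[v1 v2] eD]] [[[p1 p2] eP] [[q1 q2] eQ]]]] := HR (0, e) (0, f).
tesimp eD => ed1 ed2; tesimp eP => ep1 ep2; tesimp eQ => eq1 eq2.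
rewrite !mulr0 addr0 in ed1; subst d1.
exists d2; split; last split.
- by exists u1, v1; rewrite ed2 !scale0r !addr0.
- by exists p1; rewrite ep2 scale0r addr0.
- by exists q1; rewrite eq2 scale0r addr0.
Qed.

(* the common computation for (a,0),(0,x) *)
Lemma d1_ax (a : A) (x : E) : exists u1 u2 v1 p1 p2 q1 q2,
  [/\ a = p1 * (u1 * a), p1 *: (a *: u2 + v1 *: x) + (u1 * a) *: p2 = 0,
      q1 * (u1 * a) = 0 & x = q1 *: (a *: u2 + v1 *: x) + (u1 * a) *: q2].
Proof.
have [[d1 d2] [[[u1 u2] [[v1 v2] eD]] [[[p1 p2] eP] [[q1 q2] eQ]]]] := HR (a, 0) (0, x).
tesimp eD => ed1 ed2; tesimp eP => ep1 ep2; tesimp eQ => eq1 eq2.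
rewrite mulr0 addr0 in ed1; rewrite scaler0 add0r scale0r addr0 in ed2.
subst d1 d2.
by exists u1, u2, v1, p1, p2, q1, q2; split.
Qed.

Lemma d1_NE (a : A) : nilradical a -> forall x : E, a *: x = 0.
Proof.
case=> n an.
have step : forall x : E, exists y, a *: x = (a * a) *: y.
  move=> x; have [u1 [u2 [v1 [p1 [p2 [q1 [q2 [e1 e2 e3 e4]]]]]]]] := d1_ax a x.
  exists (u1 *: q2).
  have aq : a * q1 = 0 by rewrite e1 -mulrA (mulrC _ q1) e3 mulr0.
  rewrite {1}e4 scalerDr !scalerA aq scale0r add0r; congr (_ *: _); ring.
have gen : forall k (x : E), exists y, a *: x = (a ^+ k.+1) *: y.
  elim=> [|k IH] x; first by exists x; rewrite expr1.
  have [y ey] := step x; have [z ez] := IH y.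
  by exists z; rewrite ey -scalerA ez scalerA -exprS.
move=> x; have [y ey] := gen n x.
by rewrite ey exprSr an mul0r scale0r.
Qed.

Lemma d1_H (a : A) : nilradical a -> forall x : E, exists s, s * a = 0 /\ s *: x = x.
Proof.
case: hN => N0 Nadd Nmul N1 Np.
move=> Na x; have [u1 [u2 [v1 [p1 [p2 [q1 [q2 [e1 e2 e3 e4]]]]]]]] := d1_ax a x.
have Nua : nilradical (u1 * a) by apply: (Nmul).
rewrite (d1_NE Na) add0r !(d1_NE Nua) addr0 in e2 e4.
exists (1 - p1 * u1); split.
  by rewrite mulrBl mul1r -mulrA -e1 subrr.
have z : (p1 * u1) *: x = 0.
  rewrite {1}e4 addr0 scalerA (_ : p1 * u1 * q1 = u1 * q1 * p1); last by ring.
  by rewrite -scalerA e2 scaler0.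
by rewrite scalerBl scale1r z subr0.
Qed.

Lemma d1_div (d : A) : ~ nilradical d -> forall x : E, exists y, x = d *: y.
Proof.
case: hN => N0 Nadd Nmul N1 Np.
move=> Nd x; have [u1 [u2 [v1 [p1 [p2 [q1 [q2 [e1 e2 e3 e4]]]]]]]] := d1_ax d x.
have Nq : nilradical (q1 * u1).
  have : nilradical ((q1 * u1) * d) by rewrite -mulrA e3.
  by case/Np.
have Nt : nilradical (1 - p1 * u1).
  have : nilradical ((1 - p1 * u1) * d) by rewrite mulrBl mul1r -mulrA -e1 subrr.
  by case/Np.
have Nu : ~ nilradical u1.
  move=> Nu; apply: N1.
  have -> : (1 : A) = (1 - p1 * u1) + p1 * u1 by ring.
  by apply: (Nadd) => //; apply: (Nmul).
have Nq1 : nilradical q1 by case: (Np _ _ Nq).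
exists (u1 *: q2).
by rewrite {1}e4 (d1_NE Nq1) add0r scalerA mulrC.
Qed.

End Dir1.


Section Supp.
Variables (A : comNzRingType) (E : lmodType A).
Hypothesis hN : prime_ideal (@nilradical A).

Lemma nil_in_prime (P : A -> Prop) x : prime_ideal P -> nilradical x -> P x.
Proof.
case=> P0 Padd Pmul P1 Pp [n xn].
have key : forall k, P (x ^+ k.+1) -> P x.
  elim=> [|k IH]; first by rewrite expr1.
  by rewrite exprS => /Pp [] //; apply: IH.
case: n xn => [|n] xn.
  by move: xn; rewrite expr0 => /eqP; rewrite oner_eq0.
by apply: (key n); rewrite xn.
Qed.

Lemma supp_dom : Hprop E -> forall P : A -> Prop, in_Supp E P -> loc_is_domain P.
Proof.
case: hN => N0 Nadd Nmul N1 Np.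
move=> HH P [PP [[z s0] [ns0 nz]]].
have PP' := PP; case: PP' => P0 Padd Pmul P1 Pp.
split.
  case=> u [nu]; rewrite /= ?mulr1 ?mul0r ?subr0 ?mulr1 => u0.
  by apply: nu; rewrite u0.
move=> [x1 x2] [y1 y2] /= nx ny [u [nu]]; rewrite /= ?mul0r ?subr0 ?mulr1 => uxy.
have nuN : ~ nilradical u by move=> Nu; apply: nu; apply: nil_in_prime.
have : nilradical (u * (x1 * y1)) by rewrite uxy.
case/Np => [/nuN//|/Np Nxy].
suff gen : forall t, nilradical t -> loc_eq P (t, 1) (loc_zero A).
  by case: Nxy => [/gen [v [nv e]]|/gen [v [nv e]]]; [left|right]; exists v; split => //;
     move: e; rewrite /= !mul0r !subr0 !mulr1.
move=> t Nt; have [s [st sz]] := HH t Nt z.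
exists s; split; last by rewrite /= mul0r subr0 mulr1.
move=> Ps; apply: nz; exists (1 - s); split.
  move=> P1s; apply: P1; have -> : (1 : A) = s + (1 - s) by ring.
  exact: Padd.
by rewrite /= scaler0 subr0 scale1r scalerBl scale1r sz subrr.
Qed.

Lemma dom_H : (forall P : A -> Prop, in_Supp E P -> loc_is_domain P) -> Hprop E.
Proof.
move=> HD a Na x.
pose I z := exists p q, z = p + q /\ p * a = 0 /\ q *: x = 0.
case: (classic (I 1)) => [[p [q [e1 [pa qx]]]]|nI1].
  exists p; split => //.
  have -> : p = 1 - q by rewrite e1 addrK.
  by rewrite scalerBl scale1r qx subr0.
have I0 : I 0 by exists 0, 0; rewrite addr0 mul0r scale0r.
have Iadd : forall x y, I x -> I y -> I (x + y).
  move=> _ _ [p [q [-> [pa qx]]]] [p' [q' [-> [pa' qx']]]].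
  exists (p + p'), (q + q'); split; first by rewrite addrACA.
  by rewrite mulrDl pa pa' addr0 scalerDl qx qx' addr0.
have Imul : forall r x, I x -> I (r * x).
  move=> r _ [p [q [-> [pa qx]]]]; exists (r * p), (r * q); split; first by rewrite mulrDr.
  by rewrite -mulrA pa mulr0 -scalerA qx scaler0.
have [P [PP PI]] := krull I0 Iadd Imul nI1.
have Iu : forall u, u *: x = 0 -> P u.
  by move=> u ux; apply: PI; exists 0, u; rewrite add0r mul0r.
have Ia : forall u, u * a = 0 -> P u.
  by move=> u ua; apply: PI; exists u, 0; rewrite addr0 scale0r.
have PP' := PP; case: PP' => P0 Padd Pmul P1 Pp.
have [D1 D2] : loc_is_domain P.
  apply: HD; split => //; exists (x, 1); split => //=.
  by case=> u [nu]; rewrite /= scaler0 subr0 scale1r => /Iu.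
have gen : forall k, ~ loc_eq P (a ^+ k, 1) (loc_zero A).
  elim=> [|k IH]; first by rewrite expr0.
  move=> [u [nu eu]].
  have := D2 (a, 1) (a ^+ k, 1) P1 P1.
  case.
  - exists u; split => //; move: eu; rewrite /= !mul0r !subr0 !mulr1 exprS //.
  - by case=> v [nv]; rewrite /= mul0r subr0 mulr1 => /Ia.
  - exact: IH.
exfalso; case: Na => n an; apply: (gen n); exists 1; split => //.
by rewrite an /= mul0r subrr mulr0.
Qed.
End Supp.


Lemma M2_of_cyc (B : comNzRingType) (M : lmodType B) : fg_submods_cyclic M -> M2 M.
Proof.
move=> H a b; have [d Hd] := H [:: a; b].
have [c ec] : in_submod_gen [:: a; b] d by apply/Hd; exists 1; rewrite scale1r.
exists d; split.
  by exists (c ord0), (c (lift ord0 ord0)); rewrite ec /= !big_ord_recl big_ord0 addr0.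
split.
  apply/Hd; exists (fun k => if val k == 0%N then 1 else 0).
  by rewrite /= !big_ord_recl big_ord0 /= scale1r scale0r !addr0.
apply/Hd; exists (fun k => if val k == 1%N then 1 else 0).
by rewrite /= !big_ord_recl big_ord0 /= scale1r scale0r addr0 add0r.
Qed.

Section Dir2.
Variables (A : comNzRingType) (E : lmodType A).
Local Notation R := (triv_ext E).
Hypothesis hN : prime_ideal (@nilradical A).

Lemma fpi_div : FP_injective E -> Hprop E ->
  forall d : A, ~ nilradical d -> forall x : E, exists y, x = d *: y.
Proof.
case: hN => N0 Nadd Nmul N1 Np.
move=> HF HH d nd x.
case: (HF 1%N 1%N (\matrix_(i, j) d) (fun _ => x)) => [c|y ey]; last first.
  by exists (y ord0); have := ey ord0; rewrite big_ord1 mxE.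
move/(_ ord0); rewrite big_ord1 mxE => cd.
have Nc : nilradical (c ord0).
  have : nilradical (c ord0 * d) by rewrite cd.
  by case/Np => // /nd.
by rewrite big_ord1 (H_NE HH Nc).
Qed.

Lemma d2_P2R : P2 A -> Hprop E -> (forall d : A, ~ nilradical d -> forall x : E, exists y, x = d *: y) ->
  M2 E -> P2 R.
Proof.
case: hN => N0 Nadd Nmul N1 Np.
move=> HA HH Hdiv HM [a e] [b f].
have [d [[u [v ed]] [[p ea] [q eb]]]] := HA a b.
case: (classic (nilradical a /\ nilradical b)) => [[Na Nb]|/not_and_or nab].
  have [g [[p' [q' eg]] [[la ela] [mu emu]]]] := HM e f.
  have [s1 [s1a s1g]] := HH a Na g.
  have [s2 [s2b s2g]] := HH b Nb g.
  pose s := s1 * s2.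
  have sa : s * a = 0 by rewrite /s mulrAC s1a mul0r.
  have sb : s * b = 0 by rewrite /s -mulrA s2b mulr0.
  have sd : s * d = 0.
    have -> : s * d = u * (s * a) + v * (s * b) by rewrite ed /s; ring.
    by rewrite sa sb !mulr0 addr0.
  have sg : s *: g = g by rewrite /s -scalerA s2g s1g.
  have sg0 : (1 - s) *: g = 0 by rewrite scalerBl scale1r sg subrr.
  have se0 : (1 - s) *: e = 0 by rewrite ela scalerA mulrC -scalerA sg0 scaler0.
  have sf0 : (1 - s) *: f = 0 by rewrite emu scalerA mulrC -scalerA sg0 scaler0.
  have se : s *: e = e by apply/eqP; rewrite -subr_eq0 -[X in _ - X]scale1r -scalerBl -opprB scaleNr se0 oppr0.
  have sf : s *: f = f by apply/eqP; rewrite -subr_eq0 -[X in _ - X]scale1r -scalerBl -opprB scaleNr sf0 oppr0.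
  exists (d, g); split; last split.
  - exists (p' * s + u * (1 - s), 0), (q' * s + v * (1 - s), 0).
    rewrite teD !teM /= !scaler0 !addr0; congr pair.
      have -> : (p' * s + u * (1 - s)) * a + (q' * s + v * (1 - s)) * b =
         u * a + v * b + p' * (s * a) + q' * (s * b) - u * (s * a) - v * (s * b) by ring.
      by rewrite sa sb !mulr0 !addr0 !subr0.
    by rewrite !scalerDl -!scalerA se0 sf0 !scaler0 !addr0 !(scalerA s1 s2) -/s se sf eg.
  - exists (la * s + p * (1 - s), 0); rewrite teM /= scaler0 addr0; congr pair.
      have -> : (la * s + p * (1 - s)) * d = la * (s * d) + p * d - p * (s * d) by ring.
      by rewrite sd !mulr0 add0r subr0 -?ea -?eb.
    by rewrite scalerDl -!scalerA ?(scalerA s1 s2) -/s sg sg0 scaler0 addr0.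
  - exists (mu * s + q * (1 - s), 0); rewrite teM /= scaler0 addr0; congr pair.
      have -> : (mu * s + q * (1 - s)) * d = mu * (s * d) + q * d - q * (s * d) by ring.
      by rewrite sd !mulr0 add0r subr0 -?ea -?eb.
    by rewrite scalerDl -!scalerA ?(scalerA s1 s2) -/s sg sg0 scaler0 addr0.
have nd : ~ nilradical d.
  by move=> Nd; case: nab; apply; [rewrite ea|rewrite eb]; apply: (Nmul).
have [w ew] := Hdiv d nd (- (u *: e + v *: f)).
have [we ewe] := Hdiv d nd e.
have [wf ewf] := Hdiv d nd f.
exists (d, 0); split; last split.
- exists (u, u *: w), (v, v *: w).
  rewrite teD !teM /=; congr pair.
  exact: ed.
  by rewrite !scalerA (mulrC a) (mulrC b) addrACA -scalerDl -ed -ew subrr.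
- by exists (p, we); rewrite teM /= scaler0 add0r -ea -ewe.
- by exists (q, wf); rewrite teM /= scaler0 add0r -eb -ewf.
Qed.
End Dir2.

Unset Implicit Arguments.

Theorem proposition3p1 (A : comNzRingType) (E : lmodType A) :
  prime_ideal (@nilradical A) ->
  (exists e : E, e != 0) ->
  [<-> Hermite (triv_ext E);
       Bezout (triv_ext E);
       [/\ Bezout A,
           (forall P : A -> Prop, in_Supp E P -> loc_is_domain P),
           FP_injective E &
           fg_submods_cyclic E]].
Proof.
move=> hN _; tfae.
- by move=> H; apply: bez_of_P2; apply: herm_P2.
- move=> H; have HR := P2_of_bez H.
  have HH : Hprop E by move=> a Na x; apply: (d1_H hN HR).
  split.
  + exact: bez_of_P2 (d1_P2A HR).
  + exact: supp_dom.
  + move=> m n K e hc.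
    exact: (@FPI A E hN (d1_P2A HR) HH (d1_div hN HR) n m (fun i j => K i j) e hc).
  + exact: cyc_of_M2 (d1_M2E HR).
- case=> HA HD HF HC.
  have HH : Hprop E by apply: dom_H.
  apply: herm_of_P2; last exact: prime_nilR.
  apply: (d2_P2R hN (P2_of_bez HA) HH (fpi_div hN HF HH) (M2_of_cyc HC)).
Qed.
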